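(* Let $\mathscr K$ be a quasivariety of structures, let $\mathbf F$ be a $\mathscr K$-free structure, and let $\varepsilon$ be an endomorphism of $\mathbf F$. Let $\alpha,\beta_1,\dots,\beta_m$ be atomic formulae over $\mathbf F$. If, in the lattice $\operatorname{Con}_{\mathscr K}\mathbf F$, \[ \operatorname{con}_{\mathscr K}\alpha \le \bigvee_{j=1}^m \operatorname{con}_{\mathscr K}\beta_j, \] then \[ \operatorname{con}_{\mathscr K}(\varepsilon\alpha) \le \bigvee_{j=1}^m \operatorname{con}_{\mathscr K}(\varepsilon\beta_j). \]
   Context: Structures have a signature consisting of function symbols and relation symbols with arities; homomorphisms preserve operations and map relations into relations. A congruence on a structure $\mathbf A$ is a pair $\theta=\langle\theta_0,\theta_1\rangle$ where $\theta_0$ is an equivalence relation on $A$ compatible with the operations, and $\theta_1=\bigcup_R\theta_1^R$ where for each relation symbol $R$ of arity $n$, $R^{\mathbf A}\subseteq\theta_1^R\subseteq A^n$ and $\theta_1^R$ is closed under componentwise $\theta_0$-equivalence. Quotient structures $\mathbf A/\theta$ are formed in the natural way. A quasivariety is a class of structures closed under substructures, direct products and ultraproducts (equivalently, the class of models of a set of quasi-identities $\&_{i}\alpha_i\Rightarrow\beta$ with atomic $\alpha_i,\beta$); equality is interpreted as true equality. An atomic formula over $\mathbf F$ is either $s\approx t$ with $s,t\in F$ or $R(\mathbf s)$ with $R$ a relation symbol and $\mathbf s$ a tuple of elements of $F$ of the arity of $R$. A congruence $\psi$ of $\mathbf F$ is a $\mathscr K$-congruence if $\mathbf F/\psi\in\mathscr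 K$; these form the complete lattice $\operatorname{Con}_{\mathscr K}\mathbf F$. We write $\alpha\in\psi$ if $\alpha$ is $s\approx t$ with $(s,t)\in\psi_0$, or $\alpha$ is $R(\mathbf s)$ with $\mathbf s\in\psi_1^R$. For a set $S$ of atomic formulae, $\operatorname{con}_{\mathscr K}S$ is the intersection of all congruences $\psi$ of $\mathbf F$ with $\mathbf F/\psi\in\mathscr K$ and $S\subseteq\psi$. For an endomorphism $\varepsilon$, $\varepsilon\alpha$ denotes $\varepsilon s\approx\varepsilon t$ if $\alpha$ is $s\approx t$, and $R(\varepsilon\mathbf s)$ (componentwise) if $\alpha$ is $R(\mathbf s)$. *)

(* Defs.v *)
From mathcomp Require Import ssreflect ssrfun ssrbool eqtype ssrnat seq fintype.
From Stdlib Require Import ClassicalEpsilon.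
Set Implicit Arguments. Unset Strict Implicit. Unset Printing Implicit Defensive.

Record signature := Signature {
  fsym : Type; far : fsym -> nat;
  rsym : Type; rar : rsym -> nat }.

Section Structures.
Variable sg : signature.

Record structure := Structure {
  car :> Type;
  fop : forall f : fsym sg, ('I_(far f) -> car) -> car;
  frel : forall r : rsym sg, ('I_(rar r) -> car) -> Prop }.
Arguments fop {s} f _.
Arguments frel {s} r _.

Definition hom (A B : structure) (h : A -> B) : Prop :=
  (forall f (s : 'I_(far f) -> A), h (fop f s) = fop f (fun i => h (s i))) /\
  (forall r (s : 'I_(rar r) -> A), frel r s -> frel r (fun i => h (s i))).

Inductive atom (X : Type) : Type :=
  | AEq : X -> X -> atom X
  | ARel : forall r : rsym sg, ('I_(rar r) -> X) -> atom X.
Arguments AEq {X} _ _.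
Arguments ARel {X} r _.

Definition atom_map (X Y : Type) (e : X -> Y) (a : atom X) : atom Y :=
  match a with
  | AEq s t => AEq (e s) (e t)
  | ARel r s => ARel r (fun i => e (s i))
  end.

Inductive term : Type :=
  | Var : nat -> term
  | App : forall f : fsym sg, ('I_(far f) -> term) -> term.
Arguments App f _ : assert.

Fixpoint eval (A : structure) (v : nat -> A) (t : term) : A :=
  match t with
  | Var n => v n
  | App f ts => fop f (fun i => eval v (ts i))
  end.

Definition holds (A : structure) (v : nat -> A) (a : atom term) : Prop :=
  match a with
  | AEq s t => eval v s = eval v t
  | ARel r s => frel r (fun i => eval v (s i))
  end.

(* Quasi-identity  &_{i} alpha_i => beta  (finitely many premises). *)
Definition quasi_identity := (seq (atom term) * atom term)%type.

Definition satisfies (A : structure) (q : quasi_identity) : Prop :=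
  forall v : nat -> A, (forall a, List.In a q.1 -> holds v a) -> holds v q.2.

Definition quasivariety (K : structure -> Prop) : Prop :=
  exists Q : quasi_identity -> Prop,
    forall A, K A <-> (forall q, Q q -> satisfies A q).

(* Subuniverse generated by X is everything. *)
Definition generates (A : structure) (X : A -> Prop) : Prop :=
  forall P : A -> Prop, (forall x, X x -> P x) ->
    (forall f (s : 'I_(far f) -> A), (forall i, P (s i)) -> P (fop f s)) ->
    forall x, P x.

Definition K_free (K : structure -> Prop) (F : structure) : Prop :=
  K F /\ exists X : F -> Prop, generates X /\
    forall B : structure, K B -> forall g : {x : F | X x} -> B,
      exists h : F -> B, hom h /\ forall x (hx : X x), h x = g (exist _ x hx).

Record cpair (A : structure) := CPair {
  c0 : A -> A -> Prop;
  c1 : forall r : rsym sg, ('I_(rar r) -> A) -> Prop }.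
Arguments c0 {A} c _ _.
Arguments c1 {A} c r _.

Definition congruence (A : structure) (th : cpair A) : Prop :=
  (forall x, c0 th x x) /\
      (forall x y, c0 th x y -> c0 th y x) /\
      (forall x y z, c0 th x y -> c0 th y z -> c0 th x z) /\
      (forall f (s t : 'I_(far f) -> A), (forall i, c0 th (s i) (t i)) ->
          c0 th (fop f s) (fop f t)) /\
      (forall r (s : 'I_(rar r) -> A), frel r s -> c1 th r s) /\
      (forall r (s t : 'I_(rar r) -> A), c1 th r s ->
          (forall i, c0 th (s i) (t i)) -> c1 th r t).

(* Quotient structure A/theta: elements are theta_0-classes. *)
Definition qcar (A : structure) (th : cpair A) : Type :=
  {P : A -> Prop | exists x, P = c0 th x}.

Definition qclass (A : structure) (th : cpair A) (x : A) : qcar th :=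
  exist _ (c0 th x) (ex_intro _ x erefl).

Definition qrep (A : structure) (th : cpair A) (c : qcar th) : A :=
  proj1_sig (constructive_indefinite_description _ (proj2_sig c)).

Definition quotient (A : structure) (th : cpair A) : structure :=
  @Structure (qcar th)
    (fun f cs => qclass th (fop f (fun i => qrep (cs i))))
    (fun r cs => exists s : 'I_(rar r) -> A,
        (forall i, proj1_sig (cs i) = c0 th (s i)) /\ c1 th r s).

Definition K_congruence (K : structure -> Prop) (A : structure) (psi : cpair A) :=
  congruence psi /\ K (quotient psi).

Definition atom_in (A : structure) (psi : cpair A) (a : atom A) : Prop :=
  match a with
  | AEq s t => c0 psi s t
  | ARel r s => c1 psi r s
  end.

Definition cle (A : structure) (th psi : cpair A) : Prop :=
  (forall x y, c0 th x y -> c0 psi x y) /\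
  (forall r s, c1 th r s -> c1 psi r s).

Definition conK (K : structure -> Prop) (A : structure) (S : atom A -> Prop)
  : cpair A :=
  CPair (fun x y => forall psi, K_congruence K psi ->
                      (forall a, S a -> atom_in psi a) -> c0 psi x y)
        (fun r s => forall psi, K_congruence K psi ->
                      (forall a, S a -> atom_in psi a) -> c1 psi r s).

Definition Kjoin (K : structure -> Prop) (A : structure) (l : seq (cpair A))
  : cpair A :=
  CPair (fun x y => forall psi, K_congruence K psi ->
                      (forall th, List.In th l -> cle th psi) -> c0 psi x y)
        (fun r s => forall psi, K_congruence K psi ->
                      (forall th, List.In th l -> cle th psi) -> c1 psi r s).

End Structures.

(* Main.v *)
Require Import Defs.
From mathcomp Require Import ssreflect ssrfun ssrbool eqtype ssrnat seq fintype.
From Stdlib Require Import ClassicalEpsilon FunctionalExtensionality PropExtensionality ProofIrrelevance.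

Set Implicit Arguments. Unset Strict Implicit.
Section Aux.
Variable sg : signature.

Lemma eval_map (A B : structure sg) (j : A -> B)
  (hj : forall f (s : 'I_(far f) -> A), j (fop s) = fop (fun i => j (s i)))
  (v : nat -> A) (t : term sg) : eval (fun n => j (v n)) t = j (eval v t).
Proof.
elim: t => [n|f ts IH] //=.
rewrite hj; f_equal; apply: functional_extensionality => i; exact: IH.
Qed.

Lemma embed_sat (A B : structure sg) (j : A -> B)
  (hj : forall f (s : 'I_(far f) -> A), j (fop s) = fop (fun i => j (s i)))
  (ij : forall x y, j x = j y -> x = y)
  (rj : forall r (s : 'I_(rar r) -> A), Defs.frel s <-> Defs.frel (fun i => j (s i)))
  (q : quasi_identity sg) : satisfies B q -> satisfies A q.
Proof.
have hold : forall v a, holds (fun n => j (v n)) a <-> holds v a.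
  move=> v [s t|r s] /=.
    rewrite !eval_map //; split; [exact: ij | by move->].
  have -> : (fun i => eval (fun n => j (v n)) (s i)) = (fun i => j (eval v (s i))).
    by apply: functional_extensionality => i; rewrite eval_map.
  by rewrite -rj.
move=> HB v Hv; apply/hold; apply: HB => a Ha; apply/hold; exact: Hv.
Qed.

Lemma qrepP (A : structure sg) (th : cpair A) (c : qcar th) :
  proj1_sig c = c0 th (qrep c).
Proof. by rewrite /qrep; case: constructive_indefinite_description. Qed.

Lemma qrep_class (A : structure sg) (th : cpair A) (x : A) :
  congruence th -> c0 th (qrep (qclass th x)) x.
Proof.
move=> [refl _]; have E := qrepP (qclass th x); simpl in E.
by have := refl x; rewrite E.
Qed.

Lemma sig_eq (A : structure sg) (th : cpair A) (c d : qcar th) :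
  proj1_sig c = proj1_sig d -> c = d.
Proof.
case: c => c pc; case: d => d pd /= E; subst d; f_equal; apply: proof_irrelevance.
Qed.

Lemma c0_fun_eq (A : structure sg) (th : cpair A) x y :
  congruence th -> c0 th x y -> c0 th x = c0 th y.
Proof.
move=> [_ [sym [tr _]]] H; apply: functional_extensionality => z.
apply: propositional_extensionality; split => H'.
  exact: tr (sym _ _ H) H'.
exact: tr H H'.
Qed.

Lemma qclass_eq (A : structure sg) (th : cpair A) x y :
  congruence th -> c0 th x y -> qclass th x = qclass th y.
Proof. by move=> Hc H; apply: sig_eq => /=; apply: c0_fun_eq. Qed.

Lemma fun_eq_c0 (A : structure sg) (th : cpair A) x y :
  congruence th -> c0 th x = c0 th y -> c0 th y x.
Proof. by move=> [refl _] E; rewrite -E; apply: refl. Qed.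

Lemma cle_atom (A : structure sg) (th psi : cpair A) (a : atom sg A) :
  cle th psi -> atom_in th a -> atom_in psi a.
Proof. by case: a => [s t|r s] [H1 H2] /=; [apply: H1 | apply: H2]. Qed.

Lemma conK_self (K : structure sg -> Prop) (A : structure sg) (S : atom sg A -> Prop) a :
  S a -> atom_in (conK K S) a.
Proof. by case: a => [s t|r s] /= Ha psi _ HS; apply: (HS _ Ha). Qed.

Lemma in_map_seq (X Y : Type) (f : X -> Y) (l : seq X) x :
  List.In x l -> List.In (f x) (map f l).
Proof. elim: l => //= y l IH [->|H]; [by left | right; exact: IH]. Qed.

Lemma in_map_seq_inv (X Y : Type) (f : X -> Y) (l : seq X) y :
  List.In y (map f l) -> exists x, f x = y /\ List.In x l.
Proof.
elim: l => //= x l IH [<-|H]; first by exists x; split => //; left.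
by case: (IH H) => z [E Hz]; exists z; split => //; right.
Qed.

Section Pullback.
Variables (F : structure sg) (eps : F -> F) (psi : cpair F).
Hypothesis heps : hom eps.
Hypothesis cpsi : congruence psi.

Definition pb : cpair F :=
  @CPair sg F (fun x y => c0 psi (eps x) (eps y))
              (fun r s => @c1 sg F psi r (fun i => eps (s i))).

Lemma pb_cong : congruence pb.
Proof.
case: heps => hf hr.
case: cpsi => [refl [sym [tr [comp [rel clo]]]]].
split; first by move=> x; apply: refl.
split; first by move=> x y; apply: sym.
split; first by move=> x y z; apply: tr.
split; first by move=> f s t H /=; rewrite !hf; apply: comp.
split; first by move=> r s H /=; apply: rel; apply: hr.
by move=> r s t H1 H2 /=; apply: (clo _ _ _ H1).
Qed.

Definition jmap (c : qcar pb) : qcar psi := qclass psi (eps (qrep c)).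

Lemma pb_sat q : satisfies (quotient psi) q -> satisfies (quotient pb) q.
Proof.
have cpb := pb_cong.
case: heps => hf hr.
have [refl [sym [tr [comp [rel clo]]]]] := cpsi.
apply: (@embed_sat (quotient pb) (quotient psi) jmap).
- move=> f cs /=; rewrite /jmap; apply: qclass_eq => //.
  apply: tr; first exact: (qrep_class _ cpb).
  rewrite hf; apply: comp => i; apply: sym; exact: qrep_class.
- move=> c d E; have E' := congr1 (@proj1_sig _ _) E; simpl in E'.
  have H : c0 pb (qrep c) (qrep d) by apply: sym; exact: fun_eq_c0 E'.
  apply: sig_eq; rewrite !qrepP; exact: c0_fun_eq.
- move=> r cs /=; split.
  + move=> [s [Hs Hc]]; exists (fun i => eps (qrep (cs i))); split => // .
    apply: clo Hc _ => i.
    have E : c0 pb (s i) = c0 pb (qrep (cs i)) by rewrite -qrepP Hs.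
    exact: (fun_eq_c0 cpb (esym E)).
  + move=> [s' [Hs Hc]]; exists (fun i => qrep (cs i)); split.
      move=> i; exact (qrepP (cs i)).
    apply: clo Hc _ => i.
    have := Hs i => /= E; exact: fun_eq_c0 E.
Qed.

End Pullback.
End Aux.

Theorem lemma3p1 (sg : signature) (K : structure sg -> Prop) (F : structure sg)
  (eps : F -> F) (alpha : atom sg F) (betas : seq (atom sg F)) :
  quasivariety K -> K_free K F -> hom eps ->
  cle (conK K (fun a => a = alpha))
      (Kjoin K [seq conK K (fun a => a = b) | b <- betas]) ->
  cle (conK K (fun a => a = atom_map eps alpha))
      (Kjoin K [seq conK K (fun a => a = atom_map eps b) | b <- betas]).
Proof.
move=> [Q HQ] _ heps Hle.
have key : forall psi, K_congruence K psi ->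
    (forall th, List.In th [seq conK K (fun a => a = atom_map eps b) | b <- betas] -> cle th psi) ->
    atom_in psi (atom_map eps alpha).
  move=> psi [cpsi Kpsi] Hth.
  have Kpb : K_congruence K (pb eps psi).
    split; first exact: pb_cong.
    apply/HQ => q Hq; apply: pb_sat => //; exact: (proj1 (HQ _) Kpsi q Hq).
  have Hb : forall b, List.In b betas -> atom_in psi (atom_map eps b).
    move=> b Hb.
    have Hc := Hth (conK K (fun a => a = atom_map eps b)) (in_map_seq _ Hb).
    apply: (cle_atom Hc); exact: conK_self.
  have Ha : atom_in (Kjoin K [seq conK K (fun a => a = b) | b <- betas]) alpha.
    by apply: (cle_atom Hle); apply: conK_self.
  have Hpb : forall th, List.In th [seq conK K (fun a => a = b) | b <- betas] ->
      cle th (pb eps psi).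
    move=> th Hin0; case: (in_map_seq_inv Hin0) => b [Eb Hin]; subst th.
    have H := Hb b Hin.
    split => x y Hxy; apply: (Hxy _ Kpb) => a ->; case: b H {Hin Hin0 Hxy} => [s t|r s] /= H; exact: H.
  move: Ha; case: alpha {Hle} => [s t|r s] /= Ha; exact: (Ha _ Kpb Hpb).
split.
- move=> x y H psi Kp Hth; apply: H => // a ->; exact: key.
- move=> r s H psi Kp Hth; apply: H => // a ->; exact: key.
Qed.
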